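(* Let $L_5$ be the $5$-element linearly ordered set. There are infinitely many pairwise non-equivalent monotone games over $L_5$.
   Context: Games over a poset $A$ of atoms are defined inductively: for each $a\in A$, $[a]$ is a game (atomic); whenever $L,R$ are non-empty sets of games, $\{L\mid R\}$ is a game (composite), with left options the elements of $L$ and right options the elements of $R$. A position of $G$ is $G$ itself, an option of $G$, an option of an option, etc. Relations $\le$ and $\lhd$ on games are defined by mutual recursion: $G\le H$ iff (1) every left option $G^L$ of $G$ satisfies $G^L\lhd H$, (2) every right option $H^R$ of $H$ satisfies $G\lhd H^R$, and (3) if $G$ or $H$ is atomic then $G\lhd H$. $G\lhd H$ iff (1) some right option $G^R$ of $G$ satisfies $G^R\le H$, or (2) some left option $H^L$ of $H$ satisfies $G\le H^L$, or (3) $G=[a]$, $H=[b]$ are atomic with $a\le b$ in $A$. Games $G,H$ are equivalent if $G\le H$ and $H\le G$. A game $G$ is locally monotone if every left option satisfies $G\le G^L$ and every right option satisfies $G^R\le G$; it is monotone if every position of $G$ is locally monotone. *)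

(* Defs.v *)
From HB Require Import structures.
From mathcomp Require Import all_boot all_order.
From Stdlib Require Import List.
Set Implicit Arguments. Unset Strict Implicit. Unset Printing Implicit Defensive.
Import Order.TTheory.
Local Open Scope order_scope.

Section Games.
Context {disp : Order.disp_t} (A : porderType disp).

Inductive game : Type :=
| Atom : A -> game
| Comp : list game -> list game -> game.

Definition lefts (G : game) : list game :=
  match G with Atom _ => nil | Comp L _ => L end.
Definition rights (G : game) : list game :=
  match G with Atom _ => nil | Comp _ R => R end.
Definition is_atomic (G : game) : Prop :=
  match G with Atom _ => True | Comp _ _ => False end.

Inductive valid_game : game -> Prop :=
| valid_atom a : valid_game (Atom a)
| valid_comp L R : L <> nil -> R <> nil ->
    (forall X, In X L -> valid_game X) ->
    (forall X, In X R -> valid_game X) -> valid_game (Comp L R).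

(* The relations <= and <| (defined by well-founded mutual recursion in the
   paper; here as the corresponding mutual inductive relations, which agree
   since the recursion is well-founded). *)
Inductive game_le : game -> game -> Prop :=
| game_le_intro G H :
    (forall GL, In GL (lefts G) -> game_lf GL H) ->
    (forall HR, In HR (rights H) -> game_lf G HR) ->
    (is_atomic G \/ is_atomic H -> game_lf G H) ->
    game_le G H
with game_lf : game -> game -> Prop :=
| game_lf_right G H GR : In GR (rights G) -> game_le GR H -> game_lf G H
| game_lf_left G H HL : In HL (lefts H) -> game_le G HL -> game_lf G H
| game_lf_atom (a b : A) : a <= b -> game_lf (Atom a) (Atom b).

Definition game_equiv (G H : game) : Prop := game_le G H /\ game_le H G.

Inductive position : game -> game -> Prop :=
| pos_refl G : position G G
| pos_left G X P : In X (lefts G) -> position X P -> position G P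
| pos_right G X P : In X (rights G) -> position X P -> position G P.

Definition locally_monotone (G : game) : Prop :=
  (forall GL, In GL (lefts G) -> game_le G GL) /\
  (forall GR, In GR (rights G) -> game_le GR G).

Definition monotone (G : game) : Prop :=
  forall P, position G P -> locally_monotone P.

End Games.

Definition L5 := 'I_5.

(* Main.v *)
Require Import Defs.
From mathcomp Require Import all_boot all_order.
From Stdlib Require Import List Lia.
From mathcomp Require Import zify.
Import Order.TTheory.

Section Proof.
Local Open Scope order_scope.

Definition at_ (k : nat) (H : (k < 5)%N) : game L5 := Atom (Ordinal H).
Definition A0 := @at_ 0 isT.
Definition A1 := @at_ 1 isT.
Definition A2 := @at_ 2 isT.
Definition A3 := @at_ 3 isT.
Definition A4 := @at_ 4 isT.

Definition P : game L5 := Comp (A4 :: nil) (A2 :: nil).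

Fixpoint X (n : nat) : game L5 :=
  match n with
  | 0 => A1
  | S k => Comp (Comp (A3 :: nil) (Comp (Comp (P :: nil) (X k :: nil) :: nil) (A0 :: nil) :: nil) :: nil) (A0 :: nil)
  end.
Definition G n : game L5 := Comp (P :: nil) (X n :: nil).
Definition U n : game L5 := Comp (G n :: nil) (A0 :: nil).
Definition R n : game L5 := Comp (A3 :: nil) (U n :: nil).
Definition Q n : game L5 := Comp (R n :: nil) (A0 :: nil).
Lemma XS n : X (S n) = Q n. Proof. reflexivity. Qed.

Lemma le_inv (g h : game L5) : game_le g h ->
  (forall GL, In GL (lefts g) -> game_lf GL h) /\
  (forall HR, In HR (rights h) -> game_lf g HR) /\
  (is_atomic g \/ is_atomic h -> game_lf g h).
Proof. intros H; inversion H; subst; auto. Qed.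

Lemma lf_inv (g h : game L5) : game_lf g h ->
  (exists GR, In GR (rights g) /\ game_le GR h) \/
  (exists HL, In HL (lefts h) /\ game_le g HL) \/
  (exists a b, g = Atom a /\ h = Atom b /\ a <= b).
Proof. intros H; inversion H; subst; eauto 10. Qed.

Ltac nle_L Y := let H := fresh in intro H; apply le_inv in H;
  destruct H as [H _]; specialize (H Y ltac:(simpl; auto)); revert H.
Ltac nle_R Y := let H := fresh in intro H; apply le_inv in H;
  destruct H as [_ [H _]]; specialize (H Y ltac:(simpl; auto)); revert H.
Ltac nle_P := let H := fresh in intro H; apply le_inv in H;
  destruct H as [_ [_ H]]; specialize (H ltac:(simpl; auto)); revert H.
Ltac nlf := let H := fresh in let Z := fresh in let Hin := fresh in
  let Hle := fresh in let a := fresh in let b := fresh in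
  let E1 := fresh in let E2 := fresh in let Hab := fresh in
  intro H; apply lf_inv in H;
  destruct H as [[Z [Hin Hle]]|[[Z [Hin Hle]]|[a [b [E1 [E2 Hab]]]]]];
  [ simpl in Hin; repeat (destruct Hin as [Hin|Hin]; [subst Z|]); try contradiction; revert Hle
  | simpl in Hin; repeat (destruct Hin as [Hin|Hin]; [subst Z|]); try contradiction; revert Hle
  | try discriminate; injection E1 as <-; injection E2 as <-; revert Hab; by [] ].

Lemma N2 k : ~ game_lf A2 (X k).
Proof.
  induction k as [|k IH].
  - nlf.
  - rewrite XS. nlf.
    nle_R (U k). nlf. nle_R (X k). exact IH.
Qed.

Lemma N2R k : ~ game_le A2 (R k).
Proof. nle_R (U k). nlf. nle_R (X k). exact (N2 k). Qed.

Lemma A2lem k : ~ game_lf P (R k).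
Proof. nlf. - exact (N2R k). - nle_L A4. nlf. Qed.

Lemma A3lem i k : ~ game_le (G i) (R k).
Proof. nle_L P. exact (A2lem k). Qed.

Lemma A4lem i k : ~ game_le (R i) (G k).
Proof. nle_L A3. nlf. nle_R A2. nlf. Qed.

Lemma bundle i : forall j, lt i j ->
  ~ game_le (X i) (U j) /\
  ~ game_le (X i) (X j) /\
  ~ game_lf (G i) (X j) /\
  ~ game_le (G i) (G j) /\
  ~ game_le (U i) (U j).
Proof.
  induction i as [|i IH]; intros j Hij.
  - assert (M5 : ~ game_le (X 0) (U j)) by (nle_R A0; nlf).
    assert (M3 : ~ game_le (X 0) (X j)).
    { destruct j as [|j']; [lia|]. rewrite XS. nle_R A0. nlf. }
    assert (M2 : ~ game_lf (G 0) (X j)).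
    { destruct j as [|j']; [lia|]. rewrite XS. nlf; first [exact M3 | exact (A3lem 0 j')]. }
    assert (M1 : ~ game_le (G 0) (G j)) by (nle_R (X j); exact M2).
    assert (M4 : ~ game_le (U 0) (U j)).
    { nle_L (G 0). nlf; first [exact M5 | exact M1]. }
    tauto.
  - destruct j as [|j]; [lia|].
    assert (Hij' : lt i j) by lia.
    destruct (IH j Hij') as [_ [_ [IM2 [_ IM4]]]].
    assert (M5 : ~ game_le (X (S i)) (U (S j))).
    { rewrite XS. nle_L (R i). nlf;
      first [ exact (A4lem i (S j)) | exact (IH (S j) ltac:(lia)).2.2.2.2 ]. }
    assert (M3 : ~ game_le (X (S i)) (X (S j))).
    { rewrite !XS. nle_L (R i). nlf.
      - nle_L (G i). rewrite -XS. exact (IH (S j) ltac:(lia)).2.2.1.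
      - nle_R (U j). nlf; first [exact IM4 | exact (A4lem i j)]. }
    assert (M2 : ~ game_lf (G (S i)) (X (S j))).
    { nlf; first [exact M3 | exact (A3lem (S i) j)]. }
    assert (M1 : ~ game_le (G (S i)) (G (S j))) by (nle_R (X (S j)); exact M2).
    assert (M4 : ~ game_le (U (S i)) (U (S j))).
    { nle_L (G (S i)). nlf; first [exact M5 | exact M1]. }
    tauto.
Qed.

Ltac inl := let Z := fresh in let HZ := fresh in intros Z HZ; simpl in HZ;
  repeat (destruct HZ as [HZ|HZ]; [subst Z|]); try contradiction.
Ltac sle := apply game_le_intro; [inl | inl | try solve [intros [[]|[]]]; try intros _].
Ltac atm := apply game_lf_atom; rewrite leEord /=; lia.
Ltac lfR Y := apply game_lf_right with (GR := Y); [simpl; auto|].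
Ltac lfL Y := apply game_lf_left with (HL := Y); [simpl; auto|].

Lemma le_lf_atom (a : L5) (Y : game L5) : game_le (Atom a) Y -> game_lf (Atom a) Y.
Proof. intro H; apply le_inv in H; destruct H as [_ [_ H]]; apply H; simpl; auto. Qed.

Lemma zero_le (Y : game L5) : valid_game Y -> game_le A0 Y.
Proof.
  induction 1 as [a|L R0 HL HR _ IHL _ IHR].
  - sle. atm.
  - sle.
    + apply le_lf_atom. apply IHR. assumption.
    + destruct L as [|Z L]; [congruence|]. lfL Z. apply IHL; simpl; auto.
Qed.

Lemma vP : valid_game P.
Proof. constructor; try discriminate; inl; constructor. Qed.

Lemma vG_of {n} : valid_game (X n) -> valid_game (G n).
Proof. intro H; constructor; try discriminate; inl; [exact vP | exact H]. Qed.
Lemma vU_of {n} : valid_game (X n) -> valid_game (U n).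
Proof. intro H; constructor; try discriminate; inl; [exact (vG_of H) | constructor]. Qed.
Lemma vR_of {n} : valid_game (X n) -> valid_game (R n).
Proof. intro H; constructor; try discriminate; inl; [constructor | exact (vU_of H)]. Qed.
Lemma vQ_of {n} : valid_game (X n) -> valid_game (Q n).
Proof. intro H; constructor; try discriminate; inl; [exact (vR_of H) | constructor]. Qed.
Lemma vX n : valid_game (X n).
Proof. induction n as [|n IH]; [constructor | rewrite XS; exact (vQ_of IH)]. Qed.
Lemma vG n : valid_game (G n). Proof. exact (vG_of (vX n)). Qed.
Lemma vU n : valid_game (U n). Proof. exact (vU_of (vX n)). Qed.
Lemma vQ n : valid_game (Q n). Proof. exact (vQ_of (vX n)). Qed.

Lemma zero_atom (b : L5) : game_le A0 (Atom b).
Proof. apply zero_le; constructor. Qed.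

Section Fam.
Variable b : L5.
Hypothesis Hb : (2 <= nat_of_ord b)%N.

Lemma famX k : game_le (X k) (Atom b).
Proof.
  induction k as [|k IH].
  - sle. atm.
  - sle.
    + lfR (U k). sle.
      * lfR (X k). exact IH.
      * lfR A0. apply zero_atom.
    + lfR A0. apply zero_atom.
Qed.
Lemma famGf k : game_lf (G k) (Atom b).
Proof. lfR (X k). apply famX. Qed.
Lemma famU k : game_le (U k) (Atom b).
Proof. sle. apply famGf. lfR A0. apply zero_atom. Qed.
Lemma famG k : game_le (G k) (Atom b).
Proof. sle. lfR A2. sle. atm. apply famGf. Qed.
End Fam.

Lemma P_le4 : game_le P A4.
Proof. sle. atm. lfR A2. sle. atm. Qed.
Lemma A2_leP : game_le A2 P.
Proof. sle. atm. lfL A4. sle. atm. Qed.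
Lemma G_leP k : game_le (G k) P.
Proof. sle. lfL A4. exact P_le4. apply (famGf (Ordinal (isT : (2 < 5)%N)) isT). Qed.
Lemma X_leG k : game_le (X k) (G k).
Proof.
  destruct k as [|k].
  - sle. atm. lfL P. sle. atm. lfL A4. sle. atm.
  - sle.
    + lfL P. sle. lfL A4. sle. atm.
      lfR (U k). apply (famU (Ordinal (isT : (2 < 5)%N)) isT).
    + lfR A0. apply zero_le. apply vQ.
Qed.
Lemma R_le3 k : game_le (R k) A3.
Proof. sle. atm. lfR (U k). apply (famU (Ordinal (isT : (3 < 5)%N)) isT). Qed.
Lemma Q_leR k : game_le (Q k) (R k).
Proof. sle. lfL A3. apply R_le3. lfR A0. apply zero_le, vU. Qed.
Lemma U_leR k : game_le (U k) (R k).
Proof. sle. lfL A3. apply (famG (Ordinal (isT : (3 < 5)%N)) isT). lfR A0. apply zero_le, vU. Qed.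
Lemma U_leG k : game_le (U k) (G k).
Proof. sle. lfL P. apply G_leP. lfR A0. apply zero_le, vX. Qed.

Lemma mono_intro (g : game L5) : locally_monotone g ->
  (forall Z, In Z (lefts g) -> monotone Z) ->
  (forall Z, In Z (rights g) -> monotone Z) -> monotone g.
Proof.
  intros Hl HL HR Y Hp. inversion Hp; subst.
  - exact Hl.
  - eapply HL; eauto.
  - eapply HR; eauto.
Qed.
Lemma mono_atom (a : L5) : monotone (Atom a).
Proof. apply mono_intro; [split; inl | inl | inl]. Qed.

Ltac mono_tac := apply mono_intro; [split; inl | inl | inl].

Lemma mP : monotone P.
Proof. apply mono_intro; [split; inl; [exact P_le4 | exact A2_leP] | inl; apply mono_atom | inl; apply mono_atom]. Qed.

Lemma mG n : monotone (G n).
Proof.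
  induction n as [|n IH].
  - apply mono_intro; [split; inl; [apply G_leP | exact (X_leG 0)] | inl; exact mP | inl; apply mono_atom].
  - assert (mU : monotone (U n)).
    { apply mono_intro; [split; inl; [apply U_leG | apply zero_le, vU] | inl; exact IH | inl; apply mono_atom]. }
    assert (mR : monotone (R n)).
    { apply mono_intro; [split; inl; [apply R_le3 | apply U_leR] | inl; apply mono_atom | inl; exact mU]. }
    assert (mQ : monotone (Q n)).
    { apply mono_intro; [split; inl; [apply Q_leR | apply zero_le, vQ] | inl; exact mR | inl; apply mono_atom]. }
    apply mono_intro; [split; inl; [apply G_leP | exact (X_leG (S n))] | inl; exact mP | inl; exact mQ].
Qed.

End Proof.

Theorem corollary3p5 :
  exists f : nat -> game L5,
    (forall n, valid_game (f n) /\ monotone (f n)) /\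
    (forall m n, m <> n -> ~ game_equiv (f m) (f n)).
Proof.
  exists G. split.
  - intro n. split; [apply vG | apply mG].
  - intros m n Hmn [H1 H2].
    assert (Htri : lt m n \/ m = n \/ lt n m) by lia.
    destruct Htri as [Hlt|[Heq|Hlt]].
    + exact ((bundle _ _ Hlt).2.2.2.1 H1).
    + exact (Hmn Heq).
    + exact ((bundle _ _ Hlt).2.2.2.1 H2).
Qed.
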